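(* For all integers $n\ge0$ and $p\ge0$, $$\mathcal{B}_{n+1,p}=(n+1)\mathcal{B}_{n,p}-\sum_{k=0}^{n-2}\binom{n}{k}(-1)^{n-k}\mathcal{B}_{k+1,p}-\frac{p}{p+1}\mathcal{B}_{n,p+1},$$ with $\mathcal{B}_{0,p}=1$ (the sum being empty when $n\le1$).
   Context: For an integer $p\ge0$, the $p$-Bell numbers $\mathcal{B}_{n,p}$ are defined by $\sum_{n\ge0}\mathcal{B}_{n,p}\frac{z^n}{n!}=\sum_{n\ge0}\binom{n+p}{p}^{-1}\frac{(e^z-1)^n}{n!}$. *)

(* Defs.v *)
From mathcomp Require Import all_boot all_order all_algebra.
Set Implicit Arguments. Unset Strict Implicit. Unset Printing Implicit Defensive.
Import Order.TTheory GRing.Theory Num.Theory.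
Local Open Scope ring_scope.

Definition exp_trunc (n : nat) : {poly rat} := \poly_(i < n.+1) (i`!%:R)^-1.

(* B_{n,p} = n! [z^n] sum_{k>=0} binom(k+p,p)^{-1} (e^z-1)^k / k!.
   Terms with k > n do not contribute to [z^n] since (e^z-1)^k = O(z^k),
   and truncating e^z at degree n does not change coefficient n. *)
Definition pBell (n p : nat) : rat :=
  n`!%:R * \sum_(k < n.+1)
     ((('C(k + p, p))%:R)^-1 / (k`!)%:R * ((exp_trunc n - 1) ^+ k)`_n).

(* Main.v *)
Require Import Defs.
From mathcomp Require Import all_boot all_order all_algebra.
From mathcomp Require Import ring lra zify.
Import Order.TTheory GRing.Theory Num.Theory.
Local Open Scope ring_scope.

Lemma fact_neq0 (m : nat) : (m`!)%:R != 0 :> rat.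
Proof. by rewrite pnatr_eq0 -lt0n fact_gt0. Qed.

Lemma coefE (N m j : nat) : (m <= N)%N ->
  ((exp_trunc N) ^+ j)`_m = (j%:R)^+m / (m`!)%:R.
Proof.
elim: j m => [|j IH] m hm.
  rewrite expr0 coefC expr0n; case: m hm => [|m] _ /=; first by rewrite fact0 divr1.
  by rewrite mul0r.
rewrite exprS coefM.
have -> : \sum_(i < m.+1) (exp_trunc N)`_i * (exp_trunc N ^+ j)`_(m - i)
   = \sum_(i < m.+1) ('C(m, i))%:R * (j%:R)^+(m - i) / (m`!)%:R.
  apply: eq_bigr => [[i hi]] _ /=.
  rewrite /exp_trunc coef_poly ifT; last by lia.
  rewrite IH; last by lia.
  have hb := bin_fact (m:=i) (n:=m) (ltnSE hi).
  have hm' : (m`!)%:R = ('C(m,i))%:R * (i`!)%:R * ((m - i)`!)%:R :> rat.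
    by rewrite -hb natrM natrM mulrA.
  rewrite hm'; field.
  by rewrite !fact_neq0 pnatr_eq0 -lt0n bin_gt0 -ltnS hi.
rewrite -big_distrl /= -[j.+1]addn1 natrD exprDn.
congr (_ / _); apply: eq_bigr => i _.
by rewrite expr1n mulr1 mulr_natl.
Qed.

Definition T (n k : nat) : rat :=
  \sum_(j < k.+1) ('C(k, j))%:R * (-1) ^+ (k - j) * (j%:R) ^+ n.

Lemma coefEm1 (N m k : nat) : (m <= N)%N ->
  ((exp_trunc N - 1) ^+ k)`_m = T m k / (m`!)%:R.
Proof.
move=> hm; rewrite addrC exprDn coef_sum /T big_distrl /=.
apply: eq_bigr => i _.
have -> : (-1 : {poly rat}) ^+ (k - i) = ((-1) ^+ (k - i))%:P.
  by rewrite rmorphXn rmorphN1.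
rewrite coefMn coefCM coefE // -mulr_natl; ring.
Qed.

Lemma T_gt (n k : nat) : (n < k)%N -> T n k = 0.
Proof.
move=> hk.
have h0 : root (exp_trunc n - 1) 0.
  rewrite /root horner_coef0 coefB coef1 /exp_trunc coef_poly /= fact0.
  by rewrite invr1 subrr.
have [q hq] := factor_theorem _ _ h0.
have := @coefEm1 n n k (leqnn n).
rewrite hq subr0 exprMn coefMXn hk => /esym/eqP.
by rewrite mulf_eq0 invr_eq0 (negbTE (fact_neq0 _)) orbF => /eqP.
Qed.

Definition bb (k p : nat) : rat := (('C(k + p, p))%:R)^-1 / (k`!)%:R.

Lemma pBellE (n p N : nat) : (n < N)%N ->
  pBell n p = \sum_(k < N) bb k p * T n k.
Proof.
move=> hN.
rewrite /pBell big_distrr /=.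
transitivity (\sum_(k < n.+1) bb k p * T n k).
  apply: eq_bigr => [[k hk]] _ /=.
  rewrite coefEm1 // /bb; field.
  by rewrite !fact_neq0 pnatr_eq0 -lt0n bin_gt0 leq_addl.
rewrite (big_ord_widen _ (fun k => bb k p * T n k) hN) big_mkcond /=.
apply: eq_bigr => [[k hk]] _ /=.
case: ifP => // hkn.
by rewrite T_gt ?mulr0 //; lia.
Qed.

Lemma Tshift (n k : nat) :
  \sum_(j < n.+1) ('C(n, j))%:R * (-1) ^+ (n - j) * T j.+1 k.+1
  = (k.+1)%:R * T n k.
Proof.
rewrite /T.
under eq_bigr do rewrite big_distrr.
rewrite exchange_big /=.
transitivity (\sum_(i < k.+2) ('C(k.+1, i))%:R * (-1) ^+ (k.+1 - i) * i%:R
                 * (-1 + (i%:R : rat)) ^+ n).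
  apply: eq_bigr => i _.
  rewrite exprDn big_distrr /=; apply: eq_bigr => j _.
  rewrite exprS -mulr_natl; ring.
rewrite big_ord_recl /= mulr0 mul0r add0r big_distrr /=.
apply: eq_bigr => i _.
rewrite /bump /= add1n subSS.
have -> : -1 + (i.+1)%:R = i%:R :> rat by rewrite -addn1 natrD; ring.
have hb := mul_bin_diag k.+1 i; rewrite /= in hb.
have : (k.+1)%:R * ('C(k, i))%:R = (i.+1)%:R * ('C(k.+1, i.+1))%:R :> rat.
  by rewrite -!natrM hb.
move=> hb'.
transitivity ((i.+1)%:R * ('C(k.+1, i.+1))%:R * ((-1) ^+ (k - i) * (i%:R : rat) ^+ n)).
  ring.
rewrite -hb'; ring.
Qed.

Lemma bb_rec (k p : nat) :
  (k.+1)%:R * bb k.+1 p = bb k p - p%:R / (p.+1)%:R * bb k p.+1.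
Proof.
rewrite /bb addSn addnS factS.
have h1 := mul_bin_down (k + p).+1 p.
have h2 := mul_bin_diag (k + p).+1 p.
rewrite /= in h1 h2.
have e : ((k + p).+1 - p = k.+1)%N by lia.
rewrite e in h1.
have c0 : ('C(k + p, p))%:R != 0 :> rat by rewrite pnatr_eq0 -lt0n bin_gt0 leq_addl.
have c1 : ('C((k + p).+1, p))%:R != 0 :> rat by rewrite pnatr_eq0 -lt0n bin_gt0; lia.
have c2 : ('C((k + p).+1, p.+1))%:R != 0 :> rat by rewrite pnatr_eq0 -lt0n bin_gt0; lia.
have r1 : ((k + p).+1)%:R * ('C(k + p, p))%:R = (k.+1)%:R * ('C((k + p).+1, p))%:R :> rat.
  by rewrite -!natrM h1.
have r2 : ((k + p).+1)%:R * ('C(k + p, p))%:R = (p.+1)%:R * ('C((k + p).+1, p.+1))%:R :> rat.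
  by rewrite -!natrM h2.
have f : (k`!)%:R != 0 :> rat by exact: fact_neq0.
have hk : (k.+1)%:R != 0 :> rat by rewrite pnatr_eq0.
have hp : (p.+1)%:R != 0 :> rat by rewrite pnatr_eq0.
have hkp : ((k + p).+1)%:R != 0 :> rat by rewrite pnatr_eq0.
have e1 : ('C((k + p).+1, p))%:R = ((k + p).+1)%:R * ('C(k + p, p))%:R / (k.+1)%:R :> rat.
  by rewrite r1 mulrC mulKf.
have e2 : ('C((k + p).+1, p.+1))%:R = ((k + p).+1)%:R * ('C(k + p, p))%:R / (p.+1)%:R :> rat.
  by rewrite r2 mulrC mulKf.
rewrite natrM e1 e2.
have -> : ((k + p).+1)%:R = (k.+1)%:R + (p%:R : rat) by rewrite -addSn natrD.
rewrite -[(k + p).+1]addSn natrD in hkp.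
field.
by rewrite !nat1r f c0 hp hk hkp.
Qed.

Lemma T0 (j : nat) : T j.+1 0 = 0.
Proof. by rewrite /T big_ord1 /= expr0n /= mulr0. Qed.

Lemma FS (n p : nat) :
  \sum_(j < n.+1) ('C(n, j))%:R * (-1) ^+ (n - j) * pBell j.+1 p
  = pBell n p - p%:R / (p.+1)%:R * pBell n p.+1.
Proof.
transitivity (\sum_(j < n.+1) \sum_(k < n.+2)
   ('C(n, j))%:R * (-1) ^+ (n - j) * (bb k p * T j.+1 k)).
  apply: eq_bigr => [[j hj]] _ /=.
  by rewrite (@pBellE j.+1 p n.+2) // big_distrr.
rewrite exchange_big big_ord_recl /=.
rewrite big1 ?add0r; last by move=> j _; rewrite T0 !mulr0.
rewrite (@pBellE n p n.+1) // (@pBellE n p.+1 n.+1) // big_distrr /= -sumrB.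
apply: eq_bigr => k _.
transitivity (bb k.+1 p * \sum_(j < n.+1) ('C(n, j))%:R * (-1) ^+ (n - j) * T j.+1 k.+1).
  rewrite big_distrr /=; apply: eq_bigr => j _; rewrite /bump /= add1n; ring.
rewrite Tshift mulrA [bb _ _ * _]mulrC bb_rec; ring.
Qed.

Theorem mainTheorem8 (n p : nat) :
  pBell 0 p = 1 /\
  pBell n.+1 p =
    n.+1%:R * pBell n p
    - \sum_(0 <= k < n.-1) ('C(n, k))%:R * (-1) ^+ (n - k) * pBell k.+1 p
    - p%:R / (p.+1)%:R * pBell n p.+1.
Proof.
split.
  rewrite /pBell big_ord1 /= fact0 mul1r expr0 coef1 /= binn invr1.
  by rewrite divr1 mul1r.
have h := FS n p.
case: n h => [|m] h.
  rewrite big_geq // subr0.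
  rewrite big_ord1 /= bin0 expr0 !mul1r in h.
  by rewrite h mul1r.
rewrite /= big_mkord.
rewrite !big_ord_recr /= in h.
rewrite subnn expr0 binn subSn // subnn expr1 binSn in h.
move: h; set S := \sum_(i < m) _ => h.
have -> : pBell m.+2 p = pBell m.+1 p - p%:R / p.+1%:R * pBell m.+1 p.+1
   - S + (m.+1)%:R * pBell m.+1 p by rewrite -h; ring.
ring.
Qed.
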